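(* Let $U$ be an intersecting family of polynomials over $\mathbb{F}_q$ of degree at most $2$. Let $c\in\mathbb{F}_q$ and $\alpha,\beta\in\mathbb{F}_q$, and suppose that $U$ contains more than $\lfloor (q+1)/2\rfloor$ polynomials $h_i$ whose coefficient of $x^2$ equals $c$ and which satisfy $h_i(\alpha)=\beta$. Then every polynomial $f\in U$ whose coefficient of $x^2$ is not $c$ satisfies $f(\alpha)=\beta$.
   Context: A set of polynomials over $\mathbb{F}_q$ is intersecting if for any two members $f_1,f_2$ the graphs $\{(x,f_i(x)):x\in\mathbb{F}_q\}$ share at least one point. *)

(* Defs.v *)
From mathcomp Require Import all_boot all_algebra all_field.
From mathcomp Require Import finmap.
Set Implicit Arguments. Unset Strict Implicit. Unset Printing Implicit Defensive.
Import GRing.Theory.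
Local Open Scope ring_scope.
Local Open Scope fset_scope.

(* A family of polynomials over F is intersecting if any two members have
   graphs {(x, f x) : x in F} sharing a point, i.e. they agree at some x in F. *)
Definition intersecting (F : finFieldType) (U : {fset {poly F}}) : Prop :=
  forall f g, f \in U -> g \in U -> exists x : F, f.[x] = g.[x].

Definition deg_le2 (F : fieldType) (p : {poly F}) : bool := (size p <= 3)%N.

(* Main.v *)
Require Import Defs.
From mathcomp Require Import all_boot all_algebra all_field.
From mathcomp Require Import finmap.
From mathcomp Require Import zify ring.
Local Open Scope ring_scope.
Import GRing.Theory.

Lemma hor3 (F : fieldType) (p : {poly F}) x : (size p <= 3)%N ->
  p.[x] = (nth 0 p 0) + (nth 0 p 1) * x + (nth 0 p 2) * x ^+ 2.
Proof.
move=> sp; rewrite (horner_coef_wide x sp) !big_ord_recr big_ord0 /=.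
by rewrite add0r expr0 mulr1 expr1.
Qed.

Lemma alg (K : fieldType) (h0 h1 f0 f1 f2 c R a : K) : c - f2 != 0 ->
  h0 + h1*R + c*R^+2 = f0 + f1*R + f2*R^+2 ->
  R = -(R + (h1-f1)/(c-f2)) ->
  (h0 + h1*a + c*a^+2) - (f0 + f1*a + f2*a^+2) = (c - f2) * (R - a)^+2.
Proof.
move=> d0 g e.
have e1 : h1 = f1 - (c - f2) * R *+ 2.
  have -> : h1 = f1 + (c - f2) * ((h1 - f1) / (c - f2)) by field.
  have -> : (h1 - f1) / (c - f2) = - R - R by rewrite {1}e; ring.
  ring.
have e0 : h0 = f0 + (c - f2) * R ^+ 2.
  have -> : h0 = (h0 + h1*R + c*R^+2) - h1 * R - c * R^+2 by ring.
  rewrite g e1; ring.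
rewrite e0 e1; ring.
Qed.

Local Open Scope fset_scope.

Theorem lemma5 (F : finFieldType) (U : {fset {poly F}}) (c alpha beta : F) :
  intersecting U ->
  (forall f, f \in U -> deg_le2 f) ->
  ((#|F|.+1)./2 < #|` [fset h in U | (coefp 2 h == c) && (h.[alpha] == beta)]|)%N ->
  forall f, f \in U -> coefp 2 f != c -> f.[alpha] = beta.
Proof.
Local Open Scope ring_scope.
move=> Hint Hdeg Hcard f fU fc.
apply/eqP; apply: contraT => fab.
set H := [fset h in U | _] in Hcard.
have hH : forall h, h \in H -> [/\ h \in U, (nth 0 h 2) = c & h.[alpha] = beta].
  move=> h; rewrite !inE /= => /andP[hU /andP[/eqP -> /eqP ->]]; by [].
have sf : (size f <= 3)%N := Hdeg f fU.
rewrite /= in fc.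
set d := c - (nth 0 f 2).
have d0 : d != 0 by rewrite subr_eq0 eq_sym.
pose r h := odflt 0 [pick x | h.[x] == f.[x]].
have rP : forall h, h \in U -> h.[r h] = f.[r h].
  move=> h hU; rewrite /r; case: pickP => [x /eqP //|].
  by move=> none; have [x hx] := Hint h f hU fU; have := none x; rewrite hx eqxx.
pose s h := - (r h + ((nth 0 h 1) - (nth 0 f 1)) / d).
have sP : forall h, h \in H -> h.[s h] = f.[s h].
  move=> h hh; have [hU h2 _] := hH h hh; have := rP h hU.
  have sh : (size h <= 3)%N := Hdeg h hU.
  rewrite !hor3 // h2 /s => e; apply/eqP; rewrite -subr_eq0; apply/eqP.
  have -> : (nth 0 h 0) + (nth 0 h 1) * - (r h + ((nth 0 h 1) - (nth 0 f 1)) / d) + c * (- (r h + ((nth 0 h 1) - (nth 0 f 1)) / d)) ^+ 2 -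
    ((nth 0 f 0) + (nth 0 f 1) * - (r h + ((nth 0 h 1) - (nth 0 f 1)) / d) + (nth 0 f 2) * (- (r h + ((nth 0 h 1) - (nth 0 f 1)) / d)) ^+ 2)
    = ((nth 0 h 0) + (nth 0 h 1) * r h + c * r h ^+ 2) - ((nth 0 f 0) + (nth 0 f 1) * r h + (nth 0 f 2) * r h ^+ 2).
    rewrite /d in d0 *; field; exact: d0.
  by rewrite e subrr.
have nal : forall h x, h \in H -> h.[x] = f.[x] -> x != alpha.
  move=> h x hh e; apply: contra fab => /eqP xa; have [_ _ <-] := hH h hh.
  by rewrite -xa e.
have uH : forall h h' x, h \in H -> h' \in H -> x != alpha -> h.[x] = h'.[x] -> h = h'.
  move=> h h' x hh hh' xa e.
  have [hU h2 ha] := hH h hh; have [hU' h2' ha'] := hH h' hh'.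
  have sh : (size h <= 3)%N := Hdeg h hU; have sh' : (size h' <= 3)%N := Hdeg h' hU'.
  move: e ha; rewrite -{}ha' !hor3 // h2 h2' => e ea.
  have e1 : ((nth 0 h 1) - (nth 0 h' 1)) * (x - alpha) = 0.
    set A := _ + _ * x + _ in e; set B := _ + _ * x + _ in e.
    set C := _ + _ * alpha + _ in ea; set D := _ + _ * alpha + _ in ea.
    have -> : ((nth 0 h 1) - (nth 0 h' 1)) * (x - alpha) = (A - B) - (C - D) by rewrite /A /B /C /D; ring.
    by rewrite e ea !subrr.
  move/eqP: e1; rewrite mulf_eq0 !subr_eq0 (negbTE xa) orbF => /eqP e1.
  have e0 : (nth 0 h 0) = (nth 0 h' 0).
    by move: ea; rewrite e1 => /addIr /addIr.
  apply/polyP => i; case: i => [|[|[|i]]]; [exact: e0 | exact: e1 | by rewrite h2 h2' | ].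
  by rewrite !nth_default // ?(leq_trans sh) ?(leq_trans sh').
pose A := r @` H; pose B := s @` H.
have cA : #|` A| = #|` H|.
  apply/eqP/card_in_imfsetP => h h' hh hh' e.
  have [hU _ _] := hH h hh; have [hU' _ _] := hH h' hh'.
  apply: (uH h h' (r h)) => //; first exact: nal (rP h hU).
  by rewrite (rP h hU) e (rP h' hU').
have cB : #|` B| = #|` H|.
  apply/eqP/card_in_imfsetP => h h' hh hh' e.
  apply: (uH h h' (s h)) => //; first exact: nal (sP h hh).
  by rewrite (sP h hh) e (sP h' hh').
have cU : (#|` A `|` B| < #|F|)%N.
  have u : uniq (alpha :: (A `|` B)).
    rewrite /= fset_uniq andbT; apply/negP => /fsetUP [/imfsetP [h hh E]|/imfsetP [h hh E]].
      by have [hU _ _] := hH h hh; move: (nal _ _ hh (rP h hU)); rewrite -E eqxx.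
    by move: (nal _ _ hh (sP h hh)); rewrite -E eqxx.
  have := max_card (mem (alpha :: (A `|` B))).
  by rewrite (card_uniqP u).
pose gam := beta - f.[alpha].
pose p := ('X - alpha%:P) ^+ 2 - (gam / d)%:P.
have sp : size p = 3%N.
  by rewrite /p size_polyDl size_exp_XsubC // size_polyN size_polyC; case: (_ != 0).
have cI : (#|` A `&` B| < 3)%N.
  rewrite -sp; apply: max_poly_roots; last exact: fset_uniq.
    by rewrite -size_poly_eq0 sp.
  apply/allP => x /fsetIP [/imfsetP [h hh ->] /imfsetP [h' hh' e]].
  have [hU h2 ha] := hH h hh.
  have ehh : h = h'.
    apply: (uH h h' (r h)) => //; first exact: nal (rP h hU).
    by rewrite (rP h hU) e (sP h' hh').
  rewrite -{h' hh'}ehh in e.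
  have sh : (size h <= 3)%N := Hdeg h hU.
  have E : gam = d * (r h - alpha) ^+ 2.
    have := rP h hU; rewrite /gam -ha !hor3 // h2 => g.
    exact: alg d0 g e.
  rewrite /root /p !hornerE E; apply/eqP; rewrite /d in d0 *; field; exact: d0.
have := cardfsUI A B; rewrite cA cB => E.
have : ((#|` H|).*2 <= #|F|.+1)%N by rewrite -addnn -E; lia.
lia.
Qed.
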